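(* For any simple graph $G$ whose vertices are among the variables of $S=\mathbb{K}[x_1,\dots,x_n]$, $\mathbb{K}$ a field, we have $\operatorname{sreg}(S/I(G))\le\operatorname{cochord}(G)$.
   Context: A graph is chordal if every induced cycle has length 3, and co-chordal if its complement graph is chordal. The co-chordal cover number $\operatorname{cochord}(G)$ is the minimum number of co-chordal subgraphs of $G$ whose edge sets cover $E(G)$. $I(G)=(xy : \{x,y\}\in E(G))$ is the edge ideal. Stanley regularity: for a squarefree monomial ideal $I\subset S$, a squarefree Stanley decomposition of $S/I$ is a decomposition $S/I=\bigoplus_{i=1}^r u_i\mathbb{K}[Z_i]$ as $\mathbb{K}$-vector spaces, where $Z_i\subseteq\{x_1,\dots,x_n\}$, $u_i$ are (images of) squarefree monomials with $\operatorname{supp}(u_i)\subseteq Z_i$, and each $u_i\mathbb{K}[Z_i]$ is free over $\mathbb{K}[Z_i]$. Its Stanley regularity is $\max_i\deg(u_i)$, and $\operatorname{sreg}(S/I)$ is the minimum over all such decompositions. *)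

(* Defs.v *)
From mathcomp Require Import all_boot all_algebra.
From mathcomp Require Import mpoly.
Set Implicit Arguments.
Unset Strict Implicit.
Unset Printing Implicit Defensive.
Import GRing.Theory.
Local Open Scope ring_scope.

Definition simple_graph (n : nat) (E : rel 'I_n) : Prop :=
  (forall i j, E i j = E j i) /\ (forall i, ~~ E i i).

Definition subgraph (n : nat) (H E : rel 'I_n) : Prop :=
  forall i j, H i j -> E i j.

Definition compl_graph (n : nat) (E : rel 'I_n) : rel 'I_n :=
  fun i j => (i != j) && ~~ E i j.

Definition induced_cycle (n m : nat) (E : rel 'I_n) (c : 'I_m -> 'I_n) : Prop :=
  [/\ (3 <= m)%N, injective c &
      forall a b : 'I_m,
        E (c a) (c b) = ((a.+1 %% m == b) || (b.+1 %% m == a))%N].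

Definition chordal (n : nat) (E : rel 'I_n) : Prop :=
  forall (m : nat) (c : 'I_m -> 'I_n), induced_cycle E c -> m = 3%N.

Definition cochordal (n : nat) (E : rel 'I_n) : Prop := chordal (compl_graph E).

(* G admits a cover of its edges by k co-chordal subgraphs,
   i.e. cochord(G) <= k is witnessed. *)
Definition cochordal_cover (n : nat) (E : rel 'I_n) (k : nat)
    (H : 'I_k -> rel 'I_n) : Prop :=
  (forall l, simple_graph (H l) /\ subgraph (H l) E /\ cochordal (H l)) /\
  (forall i j, E i j -> exists l, H l i j).

Definition in_edge_ideal (K : fieldType) (n : nat) (E : rel 'I_n)
    (f : {mpoly K[n]}) : Prop :=
  exists h : 'I_n -> 'I_n -> {mpoly K[n]},
    f = \sum_(i < n) \sum_(j < n | E i j) h i j * ('X_i * 'X_j).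

Definition sqf_monomial (K : fieldType) (n : nat) (U : {set 'I_n}) : {mpoly K[n]} :=
  \prod_(i in U) 'X_i.

Definition in_subring (K : fieldType) (n : nat) (Z : {set 'I_n})
    (p : {mpoly K[n]}) : Prop :=
  forall m : 'X_{1..n}, m \in msupp p -> forall i : 'I_n, i \notin Z -> m i = 0%N.

(* A squarefree Stanley decomposition S/I(G) = (+)_l u_l K[Z_l], given by
   D : seq of pairs (supp u_l, Z_l) with supp u_l \subset Z_l:
   - (spanning) every f in S is congruent mod I(G) to some sum_l u_l g_l, g_l in K[Z_l];
   - (direct sum of free K[Z_l]-modules) if sum_l u_l g_l lies in I(G) with
     g_l in K[Z_l], then every g_l = 0. *)
Definition stanley_decomposition (K : fieldType) (n : nat) (E : rel 'I_n)
    (D : seq ({set 'I_n} * {set 'I_n})) : Prop :=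
  [/\ forall l : 'I_(size D), (nth (set0, set0) D l).1 \subset (nth (set0, set0) D l).2,
      forall f : {mpoly K[n]}, exists g : 'I_(size D) -> {mpoly K[n]},
        (forall l : 'I_(size D), in_subring (nth (set0, set0) D l).2 (g l)) /\
        in_edge_ideal E (f - \sum_(l : 'I_(size D))
                               sqf_monomial K (nth (set0, set0) D l).1 * g l) &
      forall g : 'I_(size D) -> {mpoly K[n]},
        (forall l : 'I_(size D), in_subring (nth (set0, set0) D l).2 (g l)) ->
        in_edge_ideal E (\sum_(l : 'I_(size D))
                               sqf_monomial K (nth (set0, set0) D l).1 * g l) ->
        forall l : 'I_(size D), g l = 0].

(* Stanley regularity of a decomposition: max degree of the u_l. *)
Definition stanley_reg (n : nat) (D : seq ({set 'I_n} * {set 'I_n})) : nat :=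
  \max_(p <- D) #|p.1|.

(* Main.v *)
Require Import Defs.
From mathcomp Require Import all_boot all_algebra.
From mathcomp Require Import mpoly.
From mathcomp Require Import zify.
From Stdlib Require Import Classical.
Set Implicit Arguments.
Unset Strict Implicit.
Unset Printing Implicit Defensive.

Section Paths.
Variables (n : nat) (C : rel 'I_n).
Hypothesis Csym : forall x y, C x y = C y x.
Hypothesis Cirr : forall x, ~~ C x x.

Definition apath (P : {set 'I_n}) (x y : 'I_n) (L : nat) (f : nat -> 'I_n) :=
  [/\ f 0 = x, f L = y, (forall t, t < L -> C (f t) (f t.+1)) &
      (forall t, 0 < t < L -> f t \in P)].

Definition minp P x y L := forall L' g, apath P x y L' g -> L <= L'.

Lemma minpath_ex P x y L f : apath P x y L f ->
  exists L' f', apath P x y L' f' /\ minp P x y L'.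
Proof.
elim: L {-2}L (leqnn L) f => [|N IH] L hL f hp.
  exists L, f; split => // L' g _; lia.
case: (classic (exists L' g, L' < L /\ apath P x y L' g)).
  move=> [L' [g [hl hg]]]; apply: (IH L' _ g hg); lia.
move=> hn; exists L, f; split => // L' g hg.
case: (leqP L L') => // hlt; exfalso; apply: hn; exists L', g; split => //.
Qed.

Lemma shortcut P x y L f i d : apath P x y L f -> i + d <= L ->
  (i + d < L -> C (f i) (f (i + d).+1)) -> (i + d = L -> f i = y) ->
  apath P x y (L - d) (fun t => if t <= i then f t else f (t + d)).
Proof.
move=> [h0 hL he hi] hid hc hy; split.
- by rewrite leq0n.
- case: (leqP (L - d) i) => h.
    have -> : L - d = i by lia.
    by apply: hy; lia.
  by rewrite (_ : L - d + d = L) //; lia.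
- move=> t ht; case: (leqP t i) => h1; case: (leqP t.+1 i) => h2.
  + by apply: he; lia.
  + have -> : t = i by lia.
    by apply: hc; lia.
  + lia.
  + by rewrite addSn; apply: he; lia.
- move=> t /andP [ht1 ht2]; case: (leqP t i) => h1.
    by apply: hi; apply/andP; split; lia.
  by apply: hi; apply/andP; split; lia.
Qed.

Lemma minp_ind P x y L f : apath P x y L f -> minp P x y L ->
  forall i j, i < j <= L -> (C (f i) (f j) -> j = i.+1) /\ f i <> f j.
Proof.
move=> hp hm i j hij; split.
  move=> hc; case: (ltnP i.+1 j) => h; last by lia.
  have := hm _ _ (@shortcut P x y L f i (j - i - 1) hp _ _ _).
  have e : (i + (j - i - 1)).+1 = j by lia.
  rewrite e => H.
  have : L <= L - (j - i - 1) by apply: H; [lia | move=> _; exact: hc | lia].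
  lia.
move=> he.
case: hp => [h0 hL hE hI].
have hp : apath P x y L f by [].
have := hm _ _ (@shortcut P x y L f i (j - i) hp _ _ _).
have e : i + (j - i) = j by lia.
rewrite e => H.
have : L <= L - (j - i).
  apply: H.
  - lia.
  - by move=> hj; rewrite he; apply: hE.
  - by move=> hj; rewrite he hj.
lia.
Qed.

Hypothesis Cch : chordal C.

Lemma modcyc m a b : 2 <= m -> a < b < m ->
  ((b == a.+1) || ((a == 0) && (b == m.-1))) = ((a.+1 %% m == b) || (b.+1 %% m == a)).
Proof.
move=> hm hab.
have -> : a.+1 %% m = a.+1 by apply: modn_small; lia.
case: (eqVneq b.+1 m) => eb.
  rewrite eb modnn.
  have -> : (b == m.-1) = true by apply/eqP; lia.
  by rewrite andbT [0 == a]eq_sym [a.+1 == b]eq_sym.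
have -> : b.+1 %% m = b.+1 by apply: modn_small; lia.
have -> : (b.+1 == a) = false by apply/eqP; lia.
have -> : (b == m.-1) = false by apply/eqP; lia.
by rewrite andbF eq_sym.
Qed.

Lemma no_cycle P Q x y LA fA LB fB :
  apath P x y LA fA -> minp P x y LA -> apath Q y x LB fB -> minp Q y x LB ->
  x != y -> ~~ C x y -> [disjoint P & Q] ->
  x \notin P -> y \notin P -> x \notin Q -> y \notin Q ->
  (forall u v, u \in P -> v \in Q -> ~~ C u v) -> False.
Proof.
move=> hA mA hB mB xy nxy dPQ xP yP xQ yQ nPQ.
have iA := minp_ind hA mA; have iB := minp_ind hB mB.
case: hA => [A0 AL AE AI]; case: hB => [B0 BL BE BI].
have LA2 : 2 <= LA.
  case: LA {iA mA} AL AE AI => [|[|LA]] AL AE AI //.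
    by move: xy; rewrite -A0 -AL eqxx.
  by move: (AE 0 isT); rewrite A0 AL (negbTE nxy).
have LB2 : 2 <= LB.
  case: LB {iB mB} BL BE BI => [|[|LB]] BL BE BI //.
    by move: xy; rewrite -B0 -BL eqxx.
  by move: (BE 0 isT); rewrite B0 BL Csym (negbTE nxy).
pose m := LA + LB.
pose h t := if t <= LA then fA t else fB (t - LA).
have PQd : forall u, u \in P -> u \in Q -> False.
  by move=> u uP uQ; move/disjoint_setI0: dPQ => /setP /(_ u); rewrite !inE uP uQ.
have kp : forall a b, a < b < m ->
    (C (h a) (h b) = (b == a.+1) || ((a == 0) && (b == m.-1))) /\ h a != h b.
  move=> a b hab; rewrite /h.
  case: (leqP b LA) => hb.
    have ha : a <= LA by lia.
    rewrite ha; have [i1 i2] := iA a b (ltac:(lia)); split; last by apply/eqP.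
    apply/idP/idP.
      by move/i1 => ->; rewrite eqxx.
    case/orP => [/eqP -> | /andP [/eqP a0 /eqP bm]]; first by apply: AE; lia.
    lia.
  case: (leqP a LA) => ha.
    have s0 : 0 < b - LA < LB by lia.
    have Qs : fB (b - LA) \in Q by apply: BI.
    case: (eqVneq a LA) => [eA|nA].
      rewrite eA AL -B0.
      have [i1 i2] := iB 0 (b - LA) (ltac:(lia)); split; last by apply/eqP.
      apply/idP/idP.
        by move/i1 => e; apply/orP; left; apply/eqP; lia.
      case/orP => [/eqP e | /andP [/eqP a0 _]]; last lia.
      have -> : b - LA = 1 by lia.
      by apply: BE; lia.
    case: (eqVneq a 0) => [e0|n0].
      rewrite e0 A0 -BL.
      have [i1 i2] := iB (b - LA) LB (ltac:(lia)); split; last by apply/eqP; move/esym.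
      apply/idP/idP.
        by rewrite Csym => /i1 e; apply/orP; right; apply/andP; split => //; apply/eqP; lia.
      case/orP => [/eqP e | /andP [_ /eqP bm]]; first lia.
      rewrite Csym; have -> : LB = (b - LA).+1 by lia.
      by apply: BE; lia.
    have Ps : fA a \in P by apply: AI; lia.
    split.
      rewrite (negbTE (nPQ _ _ Ps Qs)); apply/esym/negbTE.
      rewrite negb_or negb_and; apply/andP; split; first by apply/eqP; lia.
      by apply/orP; left; apply/eqP; lia.
    by apply/eqP => e; apply: (PQd (fA a)) => //; rewrite e.
  have ha' : ~~ (a <= LA) by rewrite -ltnNge.
  idtac.
  have [i1 i2] := iB (a - LA) (b - LA) (ltac:(lia)); split; last by apply/eqP.
  apply/idP/idP.
    by move/i1 => e; apply/orP; left; apply/eqP; lia.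
  case/orP => [/eqP e | /andP [/eqP a0 _]]; last lia.
  have -> : b - LA = (a - LA).+1 by lia.
  by apply: BE; lia.
pose c := fun t : 'I_m => h t.
have : induced_cycle C c.
  split; first by rewrite /m; lia.
    move=> a b /eqP e; apply/eqP; apply: contraLR e => ab.
    case: (ltngtP a b) => hab.
    - by have [_ ] := kp a b (ltac:(move: (ltn_ord a) (ltn_ord b); lia)).
    - by have [_ ] := kp b a (ltac:(move: (ltn_ord a) (ltn_ord b); lia)); rewrite eq_sym.
    - by move: ab; rewrite -(inj_eq val_inj) /= hab eqxx.
  have mm1 : forall a b : 'I_m, a < b ->
      C (c a) (c b) = ((a.+1 %% m == b) || (b.+1 %% m == a)).
    move=> a b hab; have [-> _] := kp a b (ltac:(move: (ltn_ord a) (ltn_ord b); lia)).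
    apply: modcyc; move: (ltn_ord a) (ltn_ord b); lia.
  move=> a b; case: (ltngtP a b) => hab.
  - exact: mm1.
  - by rewrite Csym mm1 // orbC.
  - have -> : a = b by apply: val_inj.
    rewrite (negbTE (Cirr _)); apply/esym/negbTE.
    have -> : b.+1 %% m == b = false.
      case: (eqVneq b.+1 m) => eb; first by rewrite eb modnn; apply/eqP; move: (ltn_ord a) (ltn_ord b); lia.
      by rewrite modn_small; [apply/eqP; lia | move: (ltn_ord a) (ltn_ord b); lia].
    by [].
by move/Cch; rewrite /m; lia.
Qed.


Definition relX (X : {set 'I_n}) : rel 'I_n := fun u v => [&& u \in X, v \in X & C u v].
Definition comp (X : {set 'I_n}) a := [set v in X | connect (relX X) a v].

Lemma comp_sub (X : {set 'I_n}) a : comp X a \subset X.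
Proof. by apply/subsetP => v; rewrite inE => /andP []. Qed.

Lemma comp_self (X : {set 'I_n}) a : a \in X -> a \in comp X a.
Proof. by move=> aX; rewrite inE aX connect0. Qed.

Lemma comp_clos (X : {set 'I_n}) a u v : u \in comp X a -> v \in X -> C u v -> v \in comp X a.
Proof.
rewrite !inE => /andP [uX cu] vX cuv; rewrite vX /=.
apply: connect_trans cu _; apply: connect1; by rewrite /relX uX vX.
Qed.

Lemma comp_apath (X : {set 'I_n}) a u v x y : u \in comp X a -> v \in comp X a ->
  C x u -> C v y -> exists L f, apath X x y L f.
Proof.
rewrite !inE => /andP [uX cu] /andP [vX cv] cxu cvy.
have sym : connect_sym (relX X).
  by apply: sym_connect_sym => p q; rewrite /relX Csym; case: (p \in X); case: (q \in X).
have cuv : connect (relX X) u v by apply: connect_trans cv; rewrite sym.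
case/connectP: cuv => p pp vl.
have hP := pathP u pp.
exists (size p).+2, (fun t => if t == 0 then x else if t <= (size p).+1
   then nth u (u :: p) t.-1 else y).
split => //.
- by rewrite /= ltnn.
- move=> t ht; case: t ht => [|t] ht /=.
    by [].
  have -> : t < (size p).+1 by lia.
  case: (leqP t.+2 (size p).+1) => h2.
    have ht2 : t < size p by lia.
    by have := hP t ht2; rewrite /relX => /and3P [_ _].
  have -> : t = size p by lia.
  have -> : nth u (u :: p) (size p) = last u p.
    by rewrite -[size p]/((size (u :: p)).-1) nth_last.
  by rewrite -vl.
- move=> t /andP [t0 tL]; case: t t0 tL => [|t] // _ tL /=.
  have -> : t < (size p).+1 by lia.
  case: t tL => [|t] tL /=; first by [].
  have ht2 : t < size p by lia.
  have := hP t ht2; by rewrite /relX => /and3P [].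
Qed.

Definition clique (W : {set 'I_n}) :=
  forall u w, u \in W -> w \in W -> u != w -> C u w.
Definition simp (W : {set 'I_n}) s :=
  forall u w, u \in W -> w \in W -> C u s -> C w s -> u != w -> C u w.

Definition sepd (W : {set 'I_n}) a b (A B : {set 'I_n}) :=
  [/\ A \subset W, B \subset W, [disjoint A & B], a \in A /\ b \in B &
      forall u v, u \in A -> v \in B -> ~~ C u v].

Lemma sepd_sym W a b A B : sepd W a b A B -> sepd W b a B A.
Proof.
case=> h1 h2 h3 [h4 h5] h6; split => //.
  by rewrite disjoint_sym.
by move=> u v uB vA; rewrite Csym; apply: h6.
Qed.

Lemma sepd_noedge W a b A B u v : sepd W a b A B -> u \in A -> v \in B -> ~~ C u v.
Proof. by case=> _ _ _ _ h6; apply: h6. Qed.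

Lemma sepd_disj W a b A B u : sepd W a b A B -> u \in A -> u \in B -> False.
Proof.
case=> _ _ h3 _ _ uA uB.
by move/disjoint_setI0: h3 => /setP /(_ u); rewrite !inE uA uB.
Qed.

Definition minsep W a b A B := sepd W a b A B /\
  forall A' B', sepd W a b A' B' -> #|W :\: (A :|: B)| <= #|W :\: (A' :|: B')|.

Lemma minsep_sym W a b A B : minsep W a b A B -> minsep W b a B A.
Proof.
case=> h hm; split; first exact: sepd_sym.
by move=> A' B' /sepd_sym /hm; rewrite setUC [B' :|: _]setUC.
Qed.

Lemma nb_claim W a b A B : minsep W a b A B ->
  forall s, s \in W :\: (A :|: B) -> exists u, u \in comp A a /\ C s u.
Proof.
case=> hs hm s sS; apply: NNPP => hn.
have nA : forall u, u \in comp A a -> ~~ C s u.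
  by move=> u uA; apply/negP => csu; apply: hn; exists u.
have := hs; case=> AW BW dAB [aA bB] _.
have A1A := comp_sub A a.
pose B' := W :\: comp A a :\: (W :\: (A :|: B) :\ s).
have sp : sepd W a b (comp A a) B'.
  split.
  - exact: subset_trans A1A AW.
  - by apply/subsetP => v; rewrite !inE => /and3P [].
  - by rewrite disjoints_subset; apply/subsetP => v; rewrite !inE => ->; rewrite !andbF.
  - split; first exact: comp_self.
    have bA : (b \in A) = false.
      by apply/negP => ba; apply: (sepd_disj hs ba bB).
    have bW : b \in W by apply: (subsetP BW).
    by rewrite !inE bW bB bA /= andbF.
  - move=> u v uA1.
    rewrite /B' in_setD => /andP [h1]; rewrite in_setD => /andP [h2 h3]; apply/negP => cuv.
    have uA : u \in A by apply: (subsetP A1A).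
    case: (boolP (v \in A)) => vA.
      by move: h2; rewrite (comp_clos uA1 vA cuv).
    case: (boolP (v \in B)) => vB.
      by move: (sepd_noedge hs uA vB); rewrite cuv.
    case: (eqVneq v s) => vs.
      by move: (nA u uA1); rewrite -vs Csym cuv.
    by move: h1; rewrite !inE (negbTE vs) h3 (negbTE vA) (negbTE vB).
have := hm _ _ sp.
have sub : W :\: (comp A a :|: B') \subset W :\: (A :|: B) :\ s.
  apply/subsetP => v; rewrite /B'; move: (v \in comp A a) => c.
  rewrite !inE.
  by case: (v \in W); case: (connect (relX A) a v); case: (v == s); case: (v \in A); case: (v \in B).
have lt : #|W :\: (A :|: B) :\ s| < #|W :\: (A :|: B)|.
  by apply: proper_card; apply: properD1.
move: (subset_leq_card sub) => le; lia.
Qed.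


Lemma minsep_ex W a b A0 B0 : sepd W a b A0 B0 -> exists A B, minsep W a b A B.
Proof.
move: {2}#|W :\: (A0 :|: B0)| (leqnn #|W :\: (A0 :|: B0)|) => N.
elim: N A0 B0 => [|N IH] A0 B0 hN hs.
  exists A0, B0; split => // A' B' _; lia.
case: (classic (exists A' B', sepd W a b A' B' /\ #|W :\: (A' :|: B')| < #|W :\: (A0 :|: B0)|)).
  move=> [A' [B' [h1 h2]]]; apply: (IH A' B') => //; lia.
move=> hn; exists A0, B0; split => // A' B' h; case: leqP => // hlt.
by exfalso; apply: hn; exists A', B'.
Qed.

Lemma lift_simp W a b A B p : sepd W a b A B -> p \in comp A a ->
  simp (comp A a :|: (W :\: (A :|: B))) p -> simp W p.
Proof.
move=> hs pA1 hsp.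
have pA : p \in A by apply: (subsetP (comp_sub A a)).
have inW1 : forall u, u \in W -> C u p -> u \in comp A a :|: (W :\: (A :|: B)).
  move=> u uW cup; rewrite Csym in cup.
  case: (boolP (u \in B)) => uB.
    by move: (sepd_noedge hs pA uB); rewrite cup.
  case: (boolP (u \in A)) => uA.
    by rewrite in_setU (comp_clos pA1 uA cup).
  by rewrite !inE uW (negbTE uA) (negbTE uB) orbT.
move=> u w uW wW cup cwp uw; apply: hsp => //; exact: inW1.
Qed.

Definition dirac_concl W := clique W \/ exists s t,
  [/\ s \in W, t \in W, s != t, ~~ C s t & simp W s /\ simp W t].

Lemma side W a b A B : minsep W a b A B ->
  (forall W' : {set 'I_n}, #|W'| < #|W| -> dirac_concl W') ->
  clique (W :\: (A :|: B)) -> exists p, p \in comp A a /\ simp W p.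
Proof.
move=> [hs hm] IH hS.
have := hs; case=> AW BW dAB [aA bB] _.
have A1A := comp_sub A a.
pose W1 := comp A a :|: (W :\: (A :|: B)).
have bA : (b \in A) = false by apply/negP => ba; apply: (sepd_disj hs ba bB).
have lt : #|W1| < #|W|.
  apply: proper_card; apply/properP; split.
    apply/subsetP => v; rewrite in_setU => /orP [vA|].
      by apply: (subsetP AW); apply: (subsetP A1A).
    by rewrite in_setD => /andP [].
  exists b; first exact: (subsetP BW).
  rewrite in_setU negb_or; apply/andP; split.
    by apply/negP => /(subsetP A1A); rewrite bA.
  by rewrite !inE bB orbT.
have ex : exists p, p \in comp A a /\ simp W1 p.
  case: (IH W1 lt) => [hc|[s [t [sW tW st nst [ss stt]]]]].
    by exists a; split; [exact: comp_self | move=> u w uW wW _ _; apply: hc].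
  case: (boolP (s \in comp A a)) => sA; first by exists s.
  case: (boolP (t \in comp A a)) => tA; first by exists t.
  move: sW tW; rewrite !in_setU (negbTE sA) (negbTE tA) /= => sS tS.
  by move: (hS s t sS tS st); rewrite (negbTE nst).
case: ex => p [pA1 hp]; exists p; split => //.
exact: (lift_simp hs pA1 hp).
Qed.

Lemma dirac N : forall W : {set 'I_n}, #|W| <= N -> dirac_concl W.
Proof.
elim: N => [|N IH] W hW.
  left => u w uW; move: hW; rewrite leqn0 cards_eq0 => /eqP W0.
  by move: uW; rewrite W0 inE.
case: (classic (clique W)) => hc; first by left.
have [a [b [aW bW ab nab]]] : exists a b, [/\ a \in W, b \in W, a != b & ~~ C a b].
  apply: NNPP => hn; apply: hc => u w uW wW uw; apply/negPn/negP => ncuw.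
  by apply: hn; exists u, w; split.
have s0 : sepd W a b [set a] [set b].
  split.
  - by rewrite sub1set.
  - by rewrite sub1set.
  - by rewrite disjoints1 inE.
  - by rewrite !inE.
  - by move=> u v; rewrite !inE => /eqP -> /eqP ->.
have [A [B hms]] := minsep_ex s0.
have hms' := minsep_sym hms.
have [hs _] := hms.
have := hs; case=> AW BW dAB [aA bB] _.
have hS : clique (W :\: (A :|: B)).
  move=> x y xS yS xy; apply: NNPP => /negP nxy.
  have [u1 [u1A cxu1]] := nb_claim hms xS.
  have [u2 [u2A cyu2]] := nb_claim hms yS.
  have xS' : x \in W :\: (B :|: A) by rewrite setUC.
  have yS' : y \in W :\: (B :|: A) by rewrite setUC.
  have [w1 [w1B cxw1]] := nb_claim hms' xS'.
  have [w2 [w2B cyw2]] := nb_claim hms' yS'.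
  rewrite Csym in cyu2.
  have [LA [fA hA]] := comp_apath u1A u2A cxu1 cyu2.
  have [LA' [fA' [hA' mA]]] := minpath_ex hA.
  rewrite Csym in cxw1.
  have [LB [fB hB]] := comp_apath w2B w1B cyw2 cxw1.
  have [LB' [fB' [hB' mB]]] := minpath_ex hB.
  move: xS yS; rewrite !inE !negb_or => /andP [/andP [xA xB] _] /andP [/andP [yA yB] _].
  apply: (no_cycle hA' mA hB' mB xy nxy dAB xA yA xB yB).
  by move=> u v uA vB; apply: (sepd_noedge hs uA vB).
have IH' : forall W' : {set 'I_n}, #|W'| < #|W| -> dirac_concl W'.
  by move=> W' hW'; apply: IH; lia.
have [p [pA hp]] := side hms IH' hS.
have hS' : clique (W :\: (B :|: A)) by rewrite setUC.
have [q [qB hq]] := side hms' IH' hS'.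
right; exists p, q.
have pA' : p \in A by apply: (subsetP (comp_sub A a)).
have qB' : q \in B by apply: (subsetP (comp_sub B b)).
split.
- exact: (subsetP AW).
- exact: (subsetP BW).
- by apply/negP => /eqP e; apply: (sepd_disj hs pA'); rewrite e.
- exact: (sepd_noedge hs).
- by [].
Qed.

Lemma simplicial_ex W : W != set0 -> exists2 s, s \in W & simp W s.
Proof.
case/set0Pn => x xW.
case: (dirac (leqnn #|W|)) => [hc|[s [t [sW _ _ _ [hs _]]]]].
  by exists x => // u w uW wW _ _; apply: hc.
by exists s.
Qed.

End Paths.


Section PEO.
Variables (n : nat) (C : rel 'I_n).
Hypothesis Csym : forall x y, C x y = C y x.
Hypothesis Cirr : forall x, ~~ C x x.
Hypothesis Cch : chordal C.

Lemma peo_ex N : forall W : {set 'I_n}, #|W| <= N -> exists rho : 'I_n -> nat,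
  (forall x y, x \in W -> y \in W -> rho x = rho y -> x = y) /\
  (forall v u w, v \in W -> u \in W -> w \in W -> rho u < rho v -> rho w < rho v ->
     C u v -> C w v -> u != w -> C u w).
Proof.
elim: N => [|N IH] W hW.
  exists (fun _ => 0); move: hW; rewrite leqn0 cards_eq0 => /eqP ->.
  by split => [x y|v u w]; rewrite inE.
case: (eqVneq W set0) => [->|Wn].
  by exists (fun _ => 0); split => [x y|v u w]; rewrite inE.
have [s sW ss] := simplicial_ex Csym Cirr Cch Wn.
have lt : #|W :\ s| < #|W| by apply: proper_card; apply: properD1.
have [r [rinj rpeo]] := IH (W :\ s) (ltac:(lia)).
pose M := \max_(y in W :\ s) r y.
have rM : forall y, y \in W :\ s -> r y <= M.
  by move=> y yW; apply: (leq_bigmax_cond (F := r)).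
clearbody M.
exists (fun x => if x == s then M.+1 else r x); split.
  move=> x y xW yW.
  case: (eqVneq x s) => [->|xs]; case: (eqVneq y s) => [->|ys] // e;
    rewrite ?eqxx ?(negbTE xs) ?(negbTE ys) in e.
  - have : y \in W :\ s by rewrite !inE ys.
    by move/rM => h; lia.
  - have : x \in W :\ s by rewrite !inE xs.
    by move/rM => h; lia.
  - by apply: rinj; rewrite // !inE ?xs ?ys.
move=> v u w vW uW wW.
case: (eqVneq v s) => [->|vs].
  case: (eqVneq u s) => [->|us]; first by rewrite ltnn.
  case: (eqVneq w s) => [->|ws]; first by rewrite ltnn.
  by move=> _ _; apply: ss.
have vW' : v \in W :\ s by rewrite !inE vs.
have := rM v vW'.
case: (eqVneq u s) => [->|us].
  by move=> h; rewrite ltnNge (leq_trans h (leqnSn _)).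
case: (eqVneq w s) => [->|ws].
  by move=> h _; rewrite ltnNge (leq_trans h (leqnSn _)).
move=> _; apply: rpeo; by rewrite // !inE ?us ?ws.
Qed.

End PEO.

Definition indep n (E : rel 'I_n) (F : {set 'I_n}) :=
  forall i j, i \in F -> j \in F -> ~~ E i j.

Definition goodkey n (E : rel 'I_n) k (key : {set 'I_n} -> {set 'I_n} * {set 'I_n}) :=
  forall F, indep E F -> [/\ (key F).1 \subset F, F \subset (key F).2, indep E (key F).2,
    #|(key F).1| <= k &
    forall F' : {set 'I_n}, (key F).1 \subset F' -> F' \subset (key F).2 -> key F' = key F].

Lemma cochordal_key n (H : rel 'I_n) : simple_graph H -> cochordal H ->
  exists key, goodkey H 1 key.
Proof.
move=> [Hsym Hirr] Hch.
pose C := compl_graph H.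
have Csym : forall x y, C x y = C y x by move=> x y; rewrite /C /compl_graph eq_sym Hsym.
have Cirr : forall x, ~~ C x x by move=> x; rewrite /C /compl_graph eqxx.
have [r [rinj rpeo]] := peo_ex Csym Cirr Hch (leqnn #|[set: 'I_n]|).
have rinj' : forall x y, r x = r y -> x = y by move=> x y; apply: rinj; rewrite inE.
pose Z (v : 'I_n) := v |: [set u | (r u < r v) && C u v].
pose key (F : {set 'I_n}) := match [pick x in F] with
  | Some x0 => ([set [arg max_(i > x0 in F) r i]], Z [arg max_(i > x0 in F) r i])
  | None => (set0, set0) end.
have amax : forall (F : {set 'I_n}) (x0 : 'I_n), x0 \in F -> let v := [arg max_(i > x0 in F) r i] in
    v \in F /\ forall y, y \in F -> r y <= r v.
  by move=> F x0 x0F /=; case: (arg_maxnP r x0F) => v vF hv; split.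
have keyv : forall (F' : {set 'I_n}) (v : 'I_n), v \in F' -> F' \subset Z v -> key F' = ([set v], Z v).
  move=> F' v vF' sF'; rewrite /key; case: pickP => [x1 x1F|F0]; last first.
    by move: (F0 v); rewrite vF'.
  have [v'F hv'] := amax F' x1 x1F.
  set v' := [arg max_(i > x1 in F') r i] in v'F hv' *.
  suff -> : v' = v by [].
  move: (subsetP sF' _ v'F); rewrite !inE => /orP [/eqP //|/andP [lt _]].
  by move: (hv' v vF'); lia.
have Zind : forall v, indep H (Z v).
  move=> v x y; rewrite !inE => /orP [/eqP ->|/andP [xl cx]] /orP [/eqP ->|/andP [yl cy]].
  - exact: Hirr.
  - by move: cy; rewrite /C /compl_graph Hsym => /andP [].
  - by move: cx; rewrite /C /compl_graph => /andP [].
  - case: (eqVneq x y) => [->|xy]; first exact: Hirr.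
    have := rpeo v x y (ltac:(by rewrite inE)) (ltac:(by rewrite inE)) (ltac:(by rewrite inE)) xl yl cx cy xy.
    by rewrite /C /compl_graph => /andP [].
exists key => F hF.
case: (pickP (mem F)) => [x0 x0F|F0].
  have [vF hv] := amax F x0 x0F.
  set v := [arg max_(i > x0 in F) r i] in vF hv.
  have sFZ : F \subset Z v.
    apply/subsetP => y yF; rewrite !inE.
    case: (eqVneq y v) => [//|yv] /=.
    have ryv : r y < r v.
      have := hv y yF; rewrite leq_eqVlt => /orP [/eqP e|//].
      by move: yv; rewrite (rinj' _ _ e) eqxx.
    by rewrite ryv /C /compl_graph yv /= (hF y v yF vF).
  rewrite (keyv F v vF sFZ) /=; split.
  - by rewrite sub1set.
  - exact: sFZ.
  - exact: Zind.
  - by rewrite cards1.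
  - move=> F' h1 h2; apply: keyv => //; by rewrite -sub1set.
have F0' : forall x, x \in F = false by move=> x; exact: F0 x.
have -> : key F = (set0, set0) by rewrite /key; case: pickP => // x; rewrite F0'.
split => //=.
- exact: sub0set.
- by apply/subsetP => x; rewrite F0'.
- by move=> i j; rewrite inE.
- by rewrite cards0.
- move=> F' _ h; rewrite /key; case: pickP => // x xF.
  by move: (subsetP h x xF); rewrite inE.
Qed.

Import GRing.Theory.


Definition indb n (E : rel 'I_n) (F : {set 'I_n}) :=
  [forall i in F, forall j in F, ~~ E i j].

Lemma indbP n (E : rel 'I_n) F : reflect (indep E F) (indb E F).
Proof.
apply: (iffP forallP) => h.
  by move=> i j iF jF; move: (h i); rewrite iF => /forallP /(_ j); rewrite jF.
by move=> i; apply/implyP => iF; apply/forallP => j; apply/implyP => jF; apply: h.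
Qed.

Section Alg.
Variables (K : fieldType) (n : nat) (E : rel 'I_n).
Hypothesis Esym : forall i j, E i j = E j i.
Hypothesis Eirr : forall i, ~~ E i i.
Local Open Scope ring_scope.

Definition supm (m : 'X_{1..n}) : {set 'I_n} := [set i | m i != 0%N].
Definition monU (U : {set 'I_n}) : 'X_{1..n} := (\sum_(i in U) U_(i))%MM.

Lemma monUE (U : {set 'I_n}) i : monU U i = (i \in U).
Proof.
rewrite /monU mnm_sumE.
case: (boolP (i \in U)) => iU.
  rewrite (bigD1 i) //= mnm1E eqxx big1 // => j /andP [_ ji].
  by rewrite mnm1E (negbTE ji).
by rewrite big1 // => j jU; rewrite mnm1E; case: eqP => // e; move: iU; rewrite -e jU.
Qed.

Lemma sqfE (U : {set 'I_n}) : sqf_monomial K U = 'X_[monU U].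
Proof.
rewrite /sqf_monomial /monU.
by rewrite (big_morph (fun m => 'X_[m] : {mpoly K[n]}) (@mpolyXD _ _) (@mpolyX0 _ _)).
Qed.

Lemma mcoeffXM (u m : 'X_{1..n}) (g : {mpoly K[n]}) :
  ('X_[u] * g)@_m = if (u <= m)%MM then g@_(m - u) else 0.
Proof.
rewrite mulrC; case: ifP => hu.
  by rewrite -{1}(submK hu) addmC mcoeffMX.
apply: memN_msupp_eq0; rewrite (perm_mem (msuppMX _ _)).
apply/mapP => [[m' _ e]]; move: hu; rewrite e; by rewrite lem_addr.
Qed.

Lemma I0 (f : {mpoly K[n]}) : in_edge_ideal (K := K) E f ->
  forall m, indep E (supm m) -> f@_m = 0.
Proof.
move=> [h ->] m hm; rewrite !raddf_sum /=; apply: big1 => i _.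
rewrite raddf_sum /=; apply: big1 => j Eij.
rewrite -mpolyXD mulrC mcoeffXM; case: ifP => // /mnm_lepP le.
have hi := le i; have hj := le j; rewrite !mnmDE !mnm1E !eqxx in hi hj.
have mi : (m i != 0)%N by rewrite -lt0n; apply: leq_trans hi; rewrite leq_addr.
have mj : (m j != 0)%N by rewrite -lt0n; apply: leq_trans hj; rewrite leq_addl.
by move: (hm i j); rewrite !inE mi mj Eij => /(_ isT isT).
Qed.

Lemma I_add (f g : {mpoly K[n]}) : in_edge_ideal (K := K) E f -> in_edge_ideal (K := K) E g -> in_edge_ideal (K := K) E (f + g).
Proof.
move=> [h1 ->] [h2 ->]; exists (fun i j => h1 i j + h2 i j).
rewrite -big_split /=; apply: eq_bigr => i _; rewrite -big_split /=.
by apply: eq_bigr => j _; rewrite mulrDl.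
Qed.

Lemma I_zero : in_edge_ideal (K := K) E 0.
Proof. by exists (fun _ _ => 0); rewrite big1 // => i _; rewrite big1 // => j _; rewrite mul0r. Qed.

Lemma I_sum (I : Type) (r : seq I) (P : pred I) (F : I -> {mpoly K[n]}) :
  (forall i, P i -> in_edge_ideal (K := K) E (F i)) -> in_edge_ideal (K := K) E (\sum_(i <- r | P i) F i).
Proof.
move=> h; elim/big_rec: _ => [|i x Pi hx]; first exact: I_zero.
by apply: I_add => //; apply: h.
Qed.

Lemma I_gen (p : {mpoly K[n]}) i j : E i j -> in_edge_ideal (K := K) E (p * ('X_i * 'X_j)).
Proof.
move=> Eij; exists (fun a b => if (a == i) && (b == j) then p else 0).
rewrite (bigD1 i) //=.
rewrite [X in _ + X]big1 => [|a ai]; last first.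
  by apply: big1 => b _; rewrite (negbTE ai) mul0r.
rewrite addr0 (bigD1 j) //= !eqxx [X in _ + X]big1 => [|b /andP [_ bj]]; last by rewrite (negbTE bj) andbF mul0r.
by rewrite !addr0.
Qed.

Lemma I_mon (c : K) m : ~~ indb E (supm m) -> in_edge_ideal (K := K) E (c *: 'X_[m]).
Proof.
move/indbP=> hn.
have [i [j [Eij mi mj]]] : exists i j, [/\ E i j, m i != 0%N & m j != 0%N].
  apply: NNPP => hn'; apply: hn => i j; rewrite !inE => mi mj; apply/negP => Eij.
  by apply: hn'; exists i, j.
have ij : i != j by apply: contraTneq Eij => ->; rewrite (negbTE (Eirr _)).
have le : (U_(i) + U_(j) <= m)%MM.
  apply/mnm_lepP => a; rewrite mnmDE !mnm1E.
  case: (eqVneq i a) => [ia|ia]; case: (eqVneq j a) => [ja|ja] //=.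
  - by move: ij; rewrite ia ja eqxx.
  - by rewrite -ia lt0n.
  - by rewrite -ja lt0n.
rewrite -(submK le) mpolyXD mpolyXD scalerAl; exact: I_gen.
Qed.


Lemma supmD m1 m2 : supm (m1 + m2) = supm m1 :|: supm m2.
Proof. by apply/setP => i; rewrite !inE mnmDE addn_eq0 negb_and. Qed.

Lemma supm_monU (U : {set 'I_n}) : supm (monU U) = U.
Proof. by apply/setP => i; rewrite !inE monUE; case: (i \in U). Qed.

Lemma monU_le (U : {set 'I_n}) m : U \subset supm m -> (monU U <= m)%MM.
Proof.
move/subsetP => h; apply/mnm_lepP => i; rewrite monUE.
case: (boolP (i \in U)) => // /h; by rewrite inE lt0n.
Qed.

Lemma supm_le m1 m2 : (m1 <= m2)%MM -> supm m1 \subset supm m2.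
Proof.
move/mnm_lepP => h; apply/subsetP => i; rewrite !inE -!lt0n => hi.
exact: leq_trans hi (h i).
Qed.

Variables (k : nat) (key : {set 'I_n} -> {set 'I_n} * {set 'I_n}).
Hypothesis hk : goodkey E k key.

Definition D := undup (map key (enum [pred F : {set 'I_n} | indb E F])).
Definition x0 : {set 'I_n} * {set 'I_n} := (set0, set0).
Definition nD (l : nat) := nth x0 D l.

Lemma uD : uniq D.
Proof. exact: undup_uniq. Qed.

Lemma keyD F : indep E F -> key F \in D.
Proof.
move/indbP => h; rewrite mem_undup; apply: map_f; by rewrite mem_enum.
Qed.

Lemma nD_good (l : 'I_(size D)) : exists2 F, indep E F & nD l = key F.
Proof.
have : nD l \in D by apply: mem_nth.
rewrite mem_undup => /mapP [F]; rewrite mem_enum => /indbP hF ->.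
by exists F.
Qed.

Lemma inD_key (l : 'I_(size D)) (F' : {set 'I_n}) :
  (nD l).1 \subset F' -> F' \subset (nD l).2 -> key F' = nD l.
Proof.
have [F hF ->] := nD_good l; have [_ _ _ _ hint] := hk hF; exact: hint.
Qed.

Lemma nD_sub (l : 'I_(size D)) : (nD l).1 \subset (nD l).2.
Proof.
have [F hF ->] := nD_good l; have [h1 h2 _ _ _] := hk hF.
exact: subset_trans h1 h2.
Qed.

Lemma nD_ind (l : 'I_(size D)) : indep E (nD l).2.
Proof. have [F hF ->] := nD_good l; by have [_ _ h3 _ _] := hk hF. Qed.

Lemma nD_inj (l l' : 'I_(size D)) : nD l = nD l' -> l = l'.
Proof.
move=> e; apply: val_inj; apply/eqP.
by rewrite -(nth_uniq x0 (ltn_ord l) (ltn_ord l') uD); apply/eqP.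
Qed.

Lemma indep_sub (A B : {set 'I_n}) : A \subset B -> indep E B -> indep E A.
Proof. by move/subsetP => h hB i j iA jA; apply: hB; apply: h. Qed.

Lemma stanley_span (f : {mpoly K[n]}) : exists g : 'I_(size D) -> {mpoly K[n]},
  (forall l : 'I_(size D), in_subring (nth (set0, set0) D l).2 (g l)) /\
  in_edge_ideal (K := K) E (f - \sum_(l : 'I_(size D))
                            sqf_monomial K (nth (set0, set0) D l).1 * g l).
Proof.
pose P m (l : 'I_(size D)) := indb E (supm m) && (key (supm m) == nD l).
pose g (l : 'I_(size D)) := \sum_(m <- msupp f | P m l) f@_m *: 'X_[m - monU (nD l).1].
exists g; split.
  move=> l m' hm' i iZ; apply/eqP; apply: contraTT hm' => mi.
  rewrite mcoeff_msupp negbK raddf_sum /=; apply/eqP; apply: big1 => m /andP [hi /eqP hkey].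
  rewrite mcoeffZ mcoeffX; case: eqP => [e|]; last by rewrite mulr0.
  exfalso; move/indbP: hi => hi; have [_ hZ _ _ _] := hk hi.
  move: iZ; rewrite -[nth _ _ _]/(nD l) -hkey => /negP; apply.
  apply: (subsetP hZ); rewrite inE; move: mi; rewrite -e mnmBE; apply: contra.
  by move/eqP => ->.
have e1 : \sum_(l : 'I_(size D)) sqf_monomial K (nth (set0, set0) D l).1 * g l =
    \sum_(m <- msupp f | indb E (supm m)) f@_m *: 'X_[m].
  have e2 : forall l : 'I_(size D), sqf_monomial K (nth (set0, set0) D l).1 * g l =
      \sum_(m <- msupp f) (if P m l then f@_m *: 'X_[m] else 0).
    move=> l; rewrite sqfE mulr_sumr big_mkcond /=; apply: eq_bigr => m _.
    case: ifP => //= /andP [hi /eqP hkey].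
    move/indbP: hi => hi; have [hU _ _ _ _] := hk hi.
    rewrite -scalerAr -mpolyXD addmC submK //; apply: monU_le.
    by rewrite -hkey.
  rewrite (eq_bigr _ (fun l _ => e2 l)) exchange_big /= [RHS]big_mkcond /=.
  apply: eq_bigr => m _; case: (boolP (indb E (supm m))) => hi; last first.
    by apply: big1 => l _; rewrite /P (negbTE hi).
  have hlt : (index (key (supm m)) D < size D)%N by rewrite index_mem; apply: keyD; apply/indbP.
  rewrite -big_mkcond /= (big_pred1 (Ordinal hlt)) // => l /=.
  rewrite /P hi /= /nD; apply/eqP/eqP => [e|->]; last by rewrite nth_index //; apply: keyD; apply/indbP.
  by apply: val_inj => /=; rewrite e index_uniq //; exact: uD.
rewrite e1 {1}(mpolyE f) (bigID (fun m => indb E (supm m))) /= addrC addrK.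
by apply: I_sum => m hm; apply: I_mon.
Qed.

Lemma stanley_indep (g : 'I_(size D) -> {mpoly K[n]}) :
  (forall l : 'I_(size D), in_subring (nth (set0, set0) D l).2 (g l)) ->
  in_edge_ideal (K := K) E (\sum_(l : 'I_(size D))
                        sqf_monomial K (nth (set0, set0) D l).1 * g l) ->
  forall l : 'I_(size D), g l = 0.
Proof.
move=> hsub hI l; apply/mpolyP => m'; rewrite mcoeff0.
case: (boolP (m' \in msupp (g l))) => hm'; last exact: memN_msupp_eq0.
pose m := (monU (nD l).1 + m')%MM.
have sZ : forall l' m'', m'' \in msupp (g l') -> supm m'' \subset (nD l').2.
  move=> l' m'' hm''; apply/subsetP => i; rewrite inE; apply: contraR => iZ.
  by apply/eqP; apply: (hsub l' m'' hm'' i iZ).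
have sm : supm m = (nD l).1 :|: supm m' by rewrite /m supmD supm_monU.
have kl : key (supm m) = nD l.
  apply: inD_key; rewrite sm; first exact: subsetUl.
  by rewrite subUset nD_sub sZ.
have hs : supm m \subset (nD l).2 by rewrite sm subUset nD_sub /=; exact: sZ.
have im : indep E (supm m) := indep_sub hs (@nD_ind l).
have := I0 hI im.
rewrite raddf_sum (bigD1 l) //= big1 => [|l' l'l].
  rewrite addr0 sqfE mcoeffXM lem_addr /m addmC addmK => ->; by [].
rewrite sqfE mcoeffXM; case: ifP => // hle.
case: (boolP ((m - monU (nD l').1)%MM \in msupp (g l'))) => h; last exact: memN_msupp_eq0.
exfalso; move/negP: l'l; apply; apply/eqP.
have : key (supm m) = nD l'.
  apply: inD_key.
    by rewrite -{1}(supm_monU (nD l').1); apply: supm_le.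
  rewrite -(submK hle) supmD subUset sZ //= supm_monU; exact: nD_sub.
by rewrite kl => /nD_inj ->.
Qed.

Lemma stanley_reg_le : (stanley_reg D <= k)%N.
Proof.
rewrite /stanley_reg big_seq; apply: (big_ind (fun x => x <= k)%N) => //.
  by move=> x y hx hy; rewrite geq_max hx hy.
move=> p; rewrite mem_undup => /mapP [F]; rewrite mem_enum => /indbP hF ->.
by have [_ _ _ h _] := hk hF.
Qed.

Lemma stanley_of_key : exists D0, stanley_decomposition K E D0 /\ (stanley_reg D0 <= k)%N.
Proof.
exists D; split; last exact: stanley_reg_le.
split.
- move=> l; exact: nD_sub.
- exact: stanley_span.
- exact: stanley_indep.
Qed.

End Alg.


Lemma combine n (E : rel 'I_n) k (H : 'I_k -> rel 'I_n)
  (keys : 'I_k -> {set 'I_n} -> {set 'I_n} * {set 'I_n}) :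
  (forall l, subgraph (H l) E) -> (forall i j, E i j -> exists l, H l i j) ->
  (forall l, goodkey (H l) 1 (keys l)) ->
  goodkey E k (fun F => (\bigcup_(l < k) (keys l F).1, \bigcap_(l < k) (keys l F).2)).
Proof.
move=> hsub hcov hk F hF.
have hFl : forall l, indep (H l) F.
  move=> l i j iF jF; apply/negP => hl; move: (hF i j iF jF).
  by rewrite (hsub l i j hl).
split => /=.
- by apply/bigcupsP => l _; have [h _ _ _ _] := hk l F (hFl l).
- by apply/bigcapsP => l _; have [_ h _ _ _] := hk l F (hFl l).
- move=> i j /bigcapP hi /bigcapP hj; apply/negP => Eij.
  have [l hl] := hcov i j Eij; have [_ _ h _ _] := hk l F (hFl l).
  by move: (h i j (hi l isT) (hj l isT)); rewrite hl.
- apply: (@leq_trans (\sum_(l < k) #|(keys l F).1|)).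
    elim/big_rec2: _ => [|l y X _ h]; first by rewrite cards0.
    by rewrite cardsU (leq_trans (leq_subr _ _)) // leq_add2l.
  have h1 : forall l : 'I_k, #|(keys l F).1| <= 1.
    by move=> l; have [_ _ _ h _] := hk l F (hFl l).
  rewrite -[X in _ <= X]card_ord -sum1_card; exact: leq_sum (fun l _ => h1 l).
- move=> F' h1 h2.
  have e : forall l, keys l F' = keys l F.
    move=> l; have [_ _ _ _ h] := hk l F (hFl l); apply: h.
      exact: subset_trans (bigcup_sup l isT) h1.
    exact: subset_trans h2 (bigcap_inf l isT).
  by congr (_, _); apply: eq_bigr => l _; rewrite e.
Qed.

Theorem theorem5p6 (K : fieldType) (n : nat) (E : rel 'I_n) :
  simple_graph E ->
  forall (k : nat) (H : 'I_k -> rel 'I_n),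
    cochordal_cover E H ->
    exists D : seq ({set 'I_n} * {set 'I_n}),
      stanley_decomposition K E D /\ (stanley_reg D <= k)%N.
Proof.
move=> [Esym Eirr] k H [hH hcov].
have ex : forall l, exists key, goodkey (H l) 1 key.
  by move=> l; have [hs [_ hc]] := hH l; exact: cochordal_key hs hc.
have [keys hkeys] := fin_all_exists ex.
have gk := combine (fun l => proj1 (proj2 (hH l))) hcov hkeys.
exact: (stanley_of_key K Eirr gk).
Qed.
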